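(* Let $G=(V,E)$ be a finite planar embedded graph, $\mathbf{p}$ a packing of $G$, $V=V^+\sqcup V^-\sqcup V^=\sqcup V^0$ a partition, and $\mathbf{p}'$ a nontrivial proper infinitesimal flex. Then exactly one of the following holds: (1) $\mathbf{p}'$ is extendable; (2) there exists an equilibrium stress $\omega$ blocking $\mathbf{p}'$.
   Context: A packing of $G=(V,E)$, $V=\{1,\dots,n\}$, is $\mathbf{p}=(x_1,y_1,r_1,\dots,x_n,y_n,r_n)\in\mathbb{R}^{3n}$, all $r_i>0$, with $(r_i+r_j)^2=(x_i-x_j)^2+(y_i-y_j)^2$ for all $(i,j)\in E$ and the neighbors of each vertex in the same counterclockwise order as in the embedding; $\mathbf{p}_i=(x_i,y_i)$. Partition: $V^+$ (radius may increase or stay), $V^-$ (may decrease or stay), $V^=$ (fixed), $V^0$ (free). An infinitesimal flex is $\mathbf{p}'$ with $(\mathbf{p}_i-\mathbf{p}_j)\cdot(\mathbf{p}_i'-\mathbf{p}_j')=(r_i+r_j)(r_i'+r_j')$ for all edges; proper if $r_i'\ge 0$ on $V^+$, $\le0$ on $V^-$, $=0$ on $V^=$; trivial if it is the derivative of a family of rigid motions (rotations/translations of centers, radii unchanged). For proper $\mathbf{p}'$, the modified partition is $\tilde V^+=\{i\in V^+:r_i'=0\}$, $\tilde V^-=\{i\in V^-:r_i'=0\}$, $\tilde V^==V^=$, $\tilde V^0$ the rest. $\mathbf{p}'$ is extendable if there is $\mathbf{p}''\in\mathbb{R}^{3n}$ with $(\mathbf{p}_i-\mathbf{p}_j)\cdot(\mathbf{p}_i''-\mathbf{p}_j'')-(r_i+r_j)(r_i''+r_j'')=(r_i'+r_j')^2-(\mathbf{p}_i'-\mathbf{p}_j')\cdot(\mathbf{p}_i'-\mathbf{p}_j')$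 for all $(i,j)\in E$, and $r_i''\ge0$ on $\tilde V^+$, $\le 0$ on $\tilde V^-$, $=0$ on $\tilde V^=$. A stress $\omega:E\to\mathbb{R}$ is an equilibrium stress if $\sum_{j:(i,j)\in E}\omega_{ij}(\mathbf{p}_i-\mathbf{p}_j)=0$ for all $i$; its radial force sum is $\omega_i=\sum_{j:(i,j)\in E}\omega_{ij}(r_i+r_j)$. An equilibrium stress $\omega$ blocks $\mathbf{p}'$ if $\omega_i\ge 0$ for $i\in\tilde V^-$, $\omega_i\le0$ for $i\in\tilde V^+$, $\omega_i=0$ for $i\in\tilde V^0$, and $\sum_{(i,j)\in E}\omega_{ij}[(\mathbf{p}_i'-\mathbf{p}_j')\cdot(\mathbf{p}_i'-\mathbf{p}_j')-(r_i'+r_j')^2]>0$. *)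

(* Defs.v *)
From HB Require Import structures.
From mathcomp Require Import all_boot all_order all_algebra.
From mathcomp Require Import reals trigo.
Set Implicit Arguments. Unset Strict Implicit. Unset Printing Implicit Defensive.
Import Order.TTheory GRing.Theory Num.Theory.
Local Open Scope ring_scope.

Definition simple_graph n (E : rel 'I_n) :=
  symmetric E /\ irreflexive E.

(** Combinatorial embedding = rotation system: rs i lists the neighbours of i
    (each exactly once) in their counterclockwise cyclic order. *)
Definition rotation_system n (E : rel 'I_n) (rs : 'I_n -> seq 'I_n) :=
  forall i, uniq (rs i) /\ forall j, (j \in rs i) = E i j.

(** Darts (ordered adjacent pairs) and the face-tracing permutation. *)
Definition dart n (E : rel 'I_n) : pred ('I_n * 'I_n) := fun d => E d.1 d.2.
Definition face_step n (rs : 'I_n -> seq 'I_n) (d : 'I_n * 'I_n) :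
  'I_n * 'I_n := (d.2, next (rs d.2) d.1).
Definition n_faces n (E : rel 'I_n) rs :=
  n_comp (frel (face_step rs)) (dart E).
Definition n_components n (E : rel 'I_n) := n_comp E (@predT 'I_n).
Definition n_isolated n (E : rel 'I_n) := #|[pred i : 'I_n | [forall j, ~~ E i j]]|.

(** The rotation system is planar (every component has genus 0): Euler's
    formula V - E + F + #isolated = 2 * #components, multiplied by 2
    (#darts = 2 #edges). *)
Definition planar_embedding n (E : rel 'I_n) rs :=
  simple_graph E /\ rotation_system E rs /\
  (2 * (n + n_faces E rs + n_isolated E) = #|dart E| + 4 * n_components E)%N.

Section Packing.
Variable R : realType.

Definition angle_of (u v t : R) :=
  0 <= t < 2 * pi /\
  u = Num.sqrt (u ^+ 2 + v ^+ 2) * cos t /\ v = Num.sqrt (u ^+ 2 + v ^+ 2) * sin t.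

Definition ccw_around n (px py : 'I_n -> R) (c : 'I_n) (s : seq 'I_n) :=
  exists (k : nat) (ts : seq R),
    size ts = size s /\ sorted <%R ts /\
    forall m, (m < size s)%N ->
      angle_of (px (nth c (rot k s) m) - px c) (py (nth c (rot k s) m) - py c)
               (nth 0 ts m).

Definition packing n (E : rel 'I_n) (rs : 'I_n -> seq 'I_n)
    (x y r : 'I_n -> R) :=
  (forall i, 0 < r i) /\
  (forall i j, E i j ->
     (r i + r j) ^+ 2 = (x i - x j) ^+ 2 + (y i - y j) ^+ 2) /\
  (forall i, ccw_around x y i (rs i)).

Definition esum n (E : rel 'I_n) (F : 'I_n -> 'I_n -> R) :=
  \sum_(i < n) \sum_(j < n | (i < j)%N && E i j) F i j.

Definition inf_flex n (E : rel 'I_n) (x y r x' y' r' : 'I_n -> R) :=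
  forall i j, E i j ->
    (x i - x j) * (x' i - x' j) + (y i - y j) * (y' i - y' j)
    = (r i + r j) * (r' i + r' j).

(** Trivial flex: derivative at t = 0 of a family of rigid motions
    t |-> (rotation by theta(t), translation T(t)), radii unchanged;
    i.e. centres move by theta' J p_i + T', and r' = 0. *)
Definition trivial_flex n (x y x' y' r' : 'I_n -> R) :=
  exists th a b : R, forall i,
    x' i = a - th * y i /\ y' i = b + th * x i /\ r' i = 0.
End Packing.

Inductive vclass := VPlus | VMinus | VEq | VZero.

Section Flex.
Variable R : realType.

Definition sign_ok (c : vclass) (v : R) : Prop :=
  match c with
  | VPlus => 0 <= v
  | VMinus => v <= 0
  | VEq => v = 0
  | VZero => True
  end.

Definition proper_flex n (cls : 'I_n -> vclass) (r' : 'I_n -> R) :=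
  forall i, sign_ok (cls i) (r' i).

Definition mod_class n (cls : 'I_n -> vclass) (r' : 'I_n -> R) (i : 'I_n) :=
  match cls i with
  | VPlus => if r' i == 0 then VPlus else VZero
  | VMinus => if r' i == 0 then VMinus else VZero
  | VEq => VEq
  | VZero => VZero
  end.

Definition extendable n (E : rel 'I_n) (cls : 'I_n -> vclass)
    (x y r x' y' r' : 'I_n -> R) :=
  exists x'' y'' r'' : 'I_n -> R,
    (forall i j, E i j ->
       (x i - x j) * (x'' i - x'' j) + (y i - y j) * (y'' i - y'' j)
       - (r i + r j) * (r'' i + r'' j)
       = (r' i + r' j) ^+ 2
         - ((x' i - x' j) ^+ 2 + (y' i - y' j) ^+ 2)) /\
    (forall i, sign_ok (mod_class cls r' i) (r'' i)).

(** Stresses: functions on (unordered) edges, encoded symmetrically. *)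
Definition equilibrium_stress n (E : rel 'I_n) (x y : 'I_n -> R)
    (w : 'I_n -> 'I_n -> R) :=
  (forall i j, w i j = w j i) /\
  forall i,
    \sum_(j < n | E i j) w i j * (x i - x j) = 0 /\
    \sum_(j < n | E i j) w i j * (y i - y j) = 0.

Definition radial_force n (E : rel 'I_n) (r : 'I_n -> R)
    (w : 'I_n -> 'I_n -> R) (i : 'I_n) :=
  \sum_(j < n | E i j) w i j * (r i + r j).

Definition force_ok (c : vclass) (v : R) : Prop :=
  match c with
  | VPlus => v <= 0
  | VMinus => 0 <= v
  | VEq => True
  | VZero => v = 0
  end.

Definition blocks n (E : rel 'I_n) (cls : 'I_n -> vclass)
    (x y r x' y' r' : 'I_n -> R) (w : 'I_n -> 'I_n -> R) :=
  equilibrium_stress E x y w /\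
  (forall i, force_ok (mod_class cls r' i) (radial_force E r w i)) /\
  0 < esum E (fun i j => w i j *
        ((x' i - x' j) ^+ 2 + (y' i - y' j) ^+ 2 - (r' i + r' j) ^+ 2)).
End Flex.

(* Main.v *)
Require Import Defs.
From HB Require Import structures.
From mathcomp Require Import all_boot all_order all_algebra.
From mathcomp Require Import reals trigo.
From mathcomp Require Import ring lra zify.
Set Implicit Arguments. Unset Strict Implicit. Unset Printing Implicit Defensive.
Import Order.TTheory GRing.Theory Num.Theory.
Local Open Scope ring_scope.

Section Sums.
Variable R : realType.
Variable n : nat.
Variable E : rel 'I_n.
Hypothesis symE : symmetric E.
Hypothesis irrE : irreflexive E.

Definition SS (F : 'I_n -> 'I_n -> R) := \sum_(i < n) \sum_(j < n | E i j) F i j.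

Lemma SS_ext F G : (forall i j, E i j -> F i j = G i j) -> SS F = SS G.
Proof. by move=> h; apply: eq_bigr => i _; apply: eq_bigr => j; apply: h. Qed.

Lemma SSD F G : SS (fun i j => F i j + G i j) = SS F + SS G.
Proof. by rewrite /SS -big_split; apply: eq_bigr => i _; rewrite big_split. Qed.

Lemma SSZ c F : SS (fun i j => c * F i j) = c * SS F.
Proof. by rewrite /SS mulr_sumr; apply: eq_bigr => i _; rewrite mulr_sumr. Qed.

Lemma SS_swap F : SS F = SS (fun i j => F j i).
Proof.
rewrite /SS.
rewrite (eq_bigr (fun i => \sum_(j < n) (if E i j then F i j else 0))); last by move=> i _; rewrite big_mkcond.
rewrite [RHS](eq_bigr (fun i => \sum_(j < n) (if E i j then F j i else 0))); last by move=> i _; rewrite big_mkcond.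
rewrite exchange_big; apply: eq_bigr => i _; apply: eq_bigr => j _.
by rewrite symE.
Qed.

Lemma SS_split F G H : (forall i j, E i j -> F i j = G i j + H j i) ->
  SS F = SS G + SS H.
Proof.
move=> h; rewrite [SS H]SS_swap -SSD; exact: SS_ext.
Qed.

Lemma SS_half F : (forall i j, F i j = F j i) -> SS F = esum E F + esum E F.
Proof.
move=> hF.
have -> : esum E F = SS (fun i j => if (i < j)%N then F i j else 0).
  rewrite /esum /SS; apply: eq_bigr => i _.
  rewrite big_mkcond [RHS]big_mkcond; apply: eq_bigr => j _.
  by case: (i < j)%N; case: (E i j).
apply: SS_split => i j hij.
case: (ltngtP i j) => h //=.
- by rewrite addr0.
- by rewrite add0r hF.
- by move: hij; rewrite (val_inj h) irrE.
Qed.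

Lemma SS_addw w1 w2 L : SS (fun i j => (w1 i j + w2 i j) * L i j) =
  SS (fun i j => w1 i j * L i j) + SS (fun i j => w2 i j * L i j).
Proof. by rewrite -SSD; apply: SS_ext => i j _; rewrite mulrDl. Qed.

Lemma SS_scalew c w L : SS (fun i j => (c * w i j) * L i j) = c * SS (fun i j => w i j * L i j).
Proof. by rewrite -SSZ; apply: SS_ext => i j _; rewrite mulrA. Qed.

Lemma sum_ind (i0 : 'I_n) (F : 'I_n -> R) :
  \sum_(i < n) ((i == i0)%:R * F i) = F i0.
Proof.
rewrite (bigD1 i0) //= eqxx mul1r big1 ?addr0 // => i hi.
by rewrite (negbTE hi) mul0r.
Qed.

Lemma SS_ind (i0 j0 : 'I_n) c (F : 'I_n -> 'I_n -> R) : E i0 j0 ->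
  SS (fun i j => (if (i == i0) && (j == j0) then c else 0) * F i j) = c * F i0 j0.
Proof.
move=> h; rewrite /SS (bigD1 i0) //=.
rewrite [X in _ + X]big1 ?addr0 => [|i hi]; last first.
  by apply: big1 => j _; rewrite (negbTE hi) mul0r.
rewrite (bigD1 j0) //= eqxx /= big1 ?addr0 ?eqxx // => j /andP [_ hj].
by rewrite (negbTE hj) mul0r.
Qed.
End Sums.
Section FM.
Variable R : realFieldType.

Definition dot (m : nat) (a z : nat -> R) := \sum_(k < m) a k * z k.

Inductive deriv (I : finType) (C : I -> (nat -> R) * R) : (nat -> R) -> R -> Prop :=
| dIn i : deriv C (C i).1 (C i).2
| dAdd a1 b1 a2 b2 : deriv C a1 b1 -> deriv C a2 b2 ->
    deriv C (fun k => a1 k + a2 k) (b1 + b2)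
| dScale c a b : 0 <= c -> deriv C a b -> deriv C (fun k => c * a k) (c * b).

Lemma sep_lower (s : seq R) : exists t, forall y, y \in s -> t <= y.
Proof.
elim: s => [|u s [t Ht]]; first by exists 0.
exists (Num.min t u) => y; rewrite inE => /orP [/eqP ->|/Ht]; first by rewrite ge_min lexx orbT.
by move=> h; rewrite ge_min h.
Qed.

Lemma sep_max (u : R) (s : seq R) : exists2 t, t \in u :: s & forall y, y \in u :: s -> y <= t.
Proof.
elim: s u => [|v s IH] u; first by exists u; rewrite ?inE // => y /[!inE] /eqP ->.
have [t Ht1 Ht2] := IH v.
case: (leP u t) => hut.
  exists t; first by rewrite inE Ht1 orbT.
  by move=> y /[!inE] /orP [/eqP ->//|]; apply: Ht2.
exists u; first by rewrite inE eqxx.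
move=> y /[!inE] /orP [/eqP ->//|] hy; apply: le_trans (Ht2 y hy) _; exact: ltW.
Qed.

Lemma sepS (s1 s2 : seq R) : (forall x y, x \in s1 -> y \in s2 -> x <= y) ->
  exists t, (forall x, x \in s1 -> x <= t) /\ (forall y, y \in s2 -> t <= y).
Proof.
case: s1 => [|u s] H.
  by have [t Ht] := sep_lower s2; exists t; split.
have [t Ht1 Ht2] := sep_max u s.
by exists t; split => // y hy; apply: H.
Qed.

Lemma dot_comb m c1 c2 (a a' z : nat -> R) :
  dot m (fun k => c1 * a k + c2 * a' k) z = c1 * dot m a z + c2 * dot m a' z.
Proof.
rewrite /dot !mulr_sumr -big_split /=; apply: eq_bigr => k _; ring.
Qed.

Lemma dot_ext m (a z : nat -> R) t :
  dot m.+1 a (fun k => if k == m then t else z k) = dot m a z + a m * t.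
Proof.
rewrite /dot big_ord_recr /= eqxx; congr (_ + _); apply: eq_bigr => k _.
by rewrite ltn_eqF.
Qed.

Theorem FM m : forall (I : finType) (C : I -> (nat -> R) * R),
  (exists z, forall i, dot m (C i).1 z <= (C i).2) \/
  (exists a b, deriv C a b /\ (forall k, (k < m)%N -> a k = 0) /\ b < 0).
Proof.
elim: m => [|m IH] I C.
  case: (boolP [exists i, (C i).2 < 0]) => [/existsP [i Hi] | /existsPn H].
    right; exists (C i).1, (C i).2; split; first exact: dIn.
    by split.
  left; exists (fun _ => 0) => i; rewrite /dot big_ord0 leNgt; exact: H.
pose CJ (j : (I + I * I)%type) : (nat -> R) * R :=
  match j with
  | inl i => if (C i).1 m == 0 then C i else (fun k => 0 * (C i).1 k, 0 * (C i).2)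
  | inr (p, q) => if (0 < (C p).1 m) && ((C q).1 m < 0) then
       (fun k => (- (C q).1 m) * (C p).1 k + (C p).1 m * (C q).1 k,
        (- (C q).1 m) * (C p).2 + (C p).1 m * (C q).2)
     else (fun k => 0 * (C p).1 k, 0 * (C p).2)
  end.
have CJd j : deriv C (CJ j).1 (CJ j).2.
  case: j => [i|[p q]] /=.
    case: ifP => _; first exact: dIn.
    by apply: dScale (dIn C i).
  case: ifP => [/andP [hp hq]|_]; last by apply: dScale (dIn C p).
  apply: (dAdd (dScale _ (dIn C p)) (dScale _ (dIn C q))); last exact: ltW.
  by rewrite oppr_ge0 ltW.
have CJm j : (CJ j).1 m = 0.
  case: j => [i|[p q]] /=.

    case: ifP => [/eqP//|_] /=; by rewrite mul0r.
  by case: ifP => _ /=; [ring | rewrite mul0r].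
have dm a b : deriv CJ a b -> a m = 0.
  elim => [j|a1 b1 a2 b2 _ h1 _ h2|c a0 b0 _ _ h] /=.
  - exact: CJm.
  - by rewrite h1 h2 addr0.
  - by rewrite h mulr0.
have dl a b : deriv CJ a b -> deriv C a b.
  elim => [j|a1 b1 a2 b2 _ h1 _ h2|c a0 b0 hc _ h] /=.
  - exact: CJd.
  - exact: dAdd.
  - exact: dScale.
case: (IH _ CJ) => [[z' Hz]|[a [b [Hd [Ha Hb]]]]]; last first.
  right; exists a, b; split; first exact: dl.
  split => // k; rewrite ltnS leq_eqVlt => /orP [/eqP ->|]; [exact: dm Hd | exact: Ha].
pose lo i := ((C i).2 - dot m (C i).1 z') / (C i).1 m.
have Hsep : forall x y, x \in [seq lo i | i <- enum I & (C i).1 m < 0] ->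
   y \in [seq lo i | i <- enum I & 0 < (C i).1 m] -> x <= y.
  move=> _ _ /mapP [q] /[!mem_filter] /andP [hq _] -> /mapP [p] /[!mem_filter] /andP [hp _] ->.
  have := Hz (inr (p, q)); rewrite /= hp hq /= dot_comb.
  rewrite /lo; set Q := (C q).1 m; set P := (C p).1 m.
  set dq := dot m (C q).1 z'; set dp := dot m (C p).1 z'.
  set bq := (C q).2; set bp := (C p).2 => H.
  have hQ : Q != 0 by rewrite lt_eqF.
  have hP : P != 0 by rewrite gt_eqF.
  set u := (bq - dq) / Q; set v := (bp - dp) / P.
  have eu : u * Q = bq - dq by rewrite /u divfK.
  have ev : v * P = bp - dp by rewrite /v divfK.
  have hPQ : 0 < P * - Q by rewrite mulr_gt0 // oppr_gt0.
  rewrite -(ler_pM2r hPQ).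
  have -> : u * (P * - Q) = - P * (u * Q) by ring.
  have -> : v * (P * - Q) = - Q * (v * P) by ring.
  rewrite eu ev; lra.
have [t [Ht1 Ht2]] := sepS Hsep.
left; exists (fun k => if k == m then t else z' k) => i.
rewrite dot_ext.
have hlo : (C i).1 m != 0 -> lo i * (C i).1 m = (C i).2 - dot m (C i).1 z'.
  by move=> h; rewrite /lo divfK.
case: (ltgtP ((C i).1 m) 0) => hi.
- have h : lo i <= t by apply: Ht1; apply: map_f; rewrite mem_filter hi mem_enum.
  have := hlo (ltr0_neq0 hi); nra.
- have h : t <= lo i by apply: Ht2; apply: map_f; rewrite mem_filter hi mem_enum.
  have := hlo (lt0r_neq0 hi); nra.
- have := Hz (inl i); rewrite /= hi eqxx /= => h; by rewrite mul0r addr0.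
Qed.
End FM.

Section Prob.
Variable R : realType.
Variable n : nat.
Variable E : rel 'I_n.
Hypothesis symE : symmetric E.
Hypothesis irrE : irreflexive E.
Variables x y r x' y' r' : 'I_n -> R.
Variable cls : 'I_n -> vclass.

Definition delta (k l : nat) : R := (k == l)%:R.

Definition linX (X Y Z : 'I_n -> R) (i j : 'I_n) :=
  (x i - x j) * (X i - X j) + (y i - y j) * (Y i - Y j)
  - (r i + r j) * (Z i + Z j).

Definition zx (z : nat -> R) (i : 'I_n) := z (3 * i)%N.
Definition zy (z : nat -> R) (i : 'I_n) := z (3 * i + 1)%N.
Definition zr (z : nat -> R) (i : 'I_n) := z (3 * i + 2)%N.

Definition Bc (i j : 'I_n) :=
  (r' i + r' j) ^+ 2 - ((x' i - x' j) ^+ 2 + (y' i - y' j) ^+ 2).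

Definition ev (i j : 'I_n) : nat -> R := fun k =>
  (x i - x j) * (delta k (3 * i) - delta k (3 * j))
  + (y i - y j) * (delta k (3 * i + 1) - delta k (3 * j + 1))
  - (r i + r j) * (delta k (3 * i + 2) + delta k (3 * j + 2)).

Definition cf (i : 'I_n) (s : bool) : R :=
  match mod_class cls r' i, s with
  | VPlus, true => -1
  | VMinus, true => 1
  | VEq, true => 1
  | VEq, false => -1
  | _, _ => 0
  end.

Definition sg (s : bool) : R := if s then 1 else -1.

Definition Cp (c : ('I_n * 'I_n * bool + 'I_n * bool)%type) : (nat -> R) * R :=
  match c with
  | inl (i, j, s) => if E i j then (fun k => sg s * ev i j k, sg s * Bc i j)
                     else (fun _ => 0, 0)
  | inr (i, s) => (fun k => cf i s * delta k (3 * i + 2), 0)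
  end.

Lemma dotD m (a b z : nat -> R) : dot m (fun k => a k + b k) z = dot m a z + dot m b z.
Proof. by rewrite /dot -big_split; apply: eq_bigr => k _; rewrite mulrDl. Qed.
Lemma dotN m (a z : nat -> R) : dot m (fun k => - a k) z = - dot m a z.
Proof. by rewrite /dot -sumrN; apply: eq_bigr => k _; rewrite mulNr. Qed.
Lemma dotZ m c (a z : nat -> R) : dot m (fun k => c * a k) z = c * dot m a z.
Proof. by rewrite /dot mulr_sumr; apply: eq_bigr => k _; rewrite mulrA. Qed.
Lemma dot0 m (z : nat -> R) : dot m (fun _ => 0) z = 0.
Proof. by rewrite /dot big1 // => k _; rewrite mul0r. Qed.

Lemma dot_delta m l (z : nat -> R) : (l < m)%N -> dot m (fun k => delta k l) z = z l.
Proof.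
move=> hl; rewrite /dot (bigD1 (Ordinal hl)) //= /delta eqxx mul1r big1 ?addr0 // => k hk.
have -> : (k == l :> nat) = false.
  apply/negbTE; apply: contra hk => /eqP h; apply/eqP; exact: val_inj.
by rewrite mul0r.
Qed.

Lemma lt3 (i : 'I_n) c : (c < 3)%N -> (3 * i + c < 3 * n)%N.
Proof. have := ltn_ord i; lia. Qed.

Lemma lt30 (i : 'I_n) : (3 * i < 3 * n)%N.
Proof. have := ltn_ord i; lia. Qed.

Lemma dot_ev (i j : 'I_n) z : dot (3 * n) (ev i j) z = linX (zx z) (zy z) (zr z) i j.
Proof.
rewrite /ev /linX /zx /zy /zr.
rewrite dotD (dotN _ (fun k => (r i + r j) * _)) dotD.
rewrite (dotZ _ _ (fun k => delta k _ - delta k _)).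
rewrite (dotZ _ _ (fun k => delta k _ - delta k _)).
rewrite (dotZ _ _ (fun k => delta k _ + delta k _)).
by rewrite !dotD !(dotN _ (fun k => delta k _)) !dot_delta ?lt3 ?lt30.
Qed.


Definition WW (w : 'I_n -> 'I_n -> R) i j := w i j + w j i.
Definition Phi w (mu : 'I_n -> R) (z : nat -> R) :=
  SS E (fun i j => w i j * linX (zx z) (zy z) (zr z) i j) + \sum_(i < n) mu i * zr z i.
Definition Psi w := SS E (fun i j => w i j * Bc i j).
Definition fok (mu : 'I_n -> R) := forall i, force_ok (mod_class cls r' i) (mu i).
Definition Sset a b := exists w mu, fok mu /\
  (forall z, dot (3 * n) a z = Phi w mu z) /\ b = Psi w.

Lemma S_add a1 b1 a2 b2 : Sset a1 b1 -> Sset a2 b2 -> Sset (fun k => a1 k + a2 k) (b1 + b2).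
Proof.
move=> [w1 [m1 [f1 [d1 e1]]]] [w2 [m2 [f2 [d2 e2]]]].
exists (fun i j => w1 i j + w2 i j), (fun i => m1 i + m2 i); split; [|split].
- move=> i; move: (f1 i) (f2 i); case: (mod_class cls r' i) => /= => [*|*|//|*]; lra.
- move=> z; rewrite dotD d1 d2 /Phi SS_addw.
  rewrite [in RHS](eq_bigr (fun i => m1 i * zr z i + m2 i * zr z i)) => [|i _]; last by rewrite mulrDl.
  rewrite big_split /=; ring.
- by rewrite e1 e2 /Psi SS_addw.
Qed.

Lemma S_scale c a b : 0 <= c -> Sset a b -> Sset (fun k => c * a k) (c * b).
Proof.
move=> hc [w [m [f [d e]]]].
exists (fun i j => c * w i j), (fun i => c * m i); split; [|split].
- move=> i; move: (f i); case: (mod_class cls r' i) => /= => [h|h|//|->]; [nra|nra|by rewrite mulr0].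
- move=> z; rewrite dotZ d /Phi SS_scalew mulrDr; congr (_ + _).
  by rewrite mulr_sumr; apply: eq_bigr => i _; rewrite mulrA.
- by rewrite e /Psi SS_scalew.
Qed.

Lemma fok0 : fok (fun _ => 0).
Proof. by rewrite /fok => i; case: (mod_class cls r' i) => /=. Qed.

Lemma Phi0 z : SS E (fun i j => 0 * linX (zx z) (zy z) (zr z) i j) = 0.
Proof. by rewrite /SS big1 // => i _; rewrite big1 // => j _; rewrite mul0r. Qed.

Lemma S_Cp c : Sset (Cp c).1 (Cp c).2.
Proof.
case: c => [[[i j] s]|[i s]] /=.
  case: ifP => hij /=.
    exists (fun i' j' => if (i' == i) && (j' == j) then sg s else 0), (fun _ => 0).
    split; [exact: fok0|split].
    + move=> z; rewrite dotZ dot_ev /Phi (SS_ind _ _ hij).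
      by rewrite big1 ?addr0 // => k _; rewrite mul0r.
    + by rewrite /Psi (SS_ind _ _ hij).
  exists (fun _ _ => 0), (fun _ => 0); split; [exact: fok0|split].
  + move=> z; rewrite dot0 /Phi Phi0 // big1 ?addr0 // => k _; by rewrite mul0r.
  + by rewrite /Psi /SS big1 // => i' _; rewrite big1 // => j' _; rewrite mul0r.
exists (fun _ _ => 0), (fun i' => if i' == i then cf i s else 0); split; [|split].
- rewrite /fok => i'; case: eqP => [->|_]; last by case: (mod_class cls r' i') => /=.
  rewrite /cf; case: (mod_class cls r' i); case: s => /=; (try lra); done.
- move=> z; rewrite (dotZ _ _ (fun k => delta k _)) dot_delta ?lt3 //.
  rewrite /Phi Phi0 // add0r (bigD1 i) //= eqxx big1 ?addr0 // => k hk.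
  by rewrite (negbTE hk) mul0r.
- by rewrite /Psi /SS big1 // => i' _; rewrite big1 // => j' _; rewrite mul0r.
Qed.

Lemma EXP w X Y Z : SS E (fun i j => w i j * linX X Y Z i j) =
  \sum_(i < n) (X i * \sum_(j < n | E i j) WW w i j * (x i - x j)
              + Y i * \sum_(j < n | E i j) WW w i j * (y i - y j)
              - Z i * radial_force E r (WW w) i).
Proof.
pose K i j := X i * (x i - x j) + Y i * (y i - y j) - Z i * (r i + r j).
rewrite (@SS_split _ _ _ symE _ (fun i j => w i j * K i j) (fun i j => w j i * K i j)); last first.
  by move=> i j _; rewrite /K /linX; ring.
rewrite -SSD /SS; apply: eq_bigr => i _.
rewrite /radial_force !mulr_sumr -big_split -sumrB /=; apply: eq_bigr => j _.
rewrite /K /WW; ring.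
Qed.

Lemma eq3 (i i0 : 'I_n) a c : (a < 3)%N -> (c < 3)%N ->
  (3 * i + a == 3 * i0 + c)%N = (i == i0) && (a == c).
Proof.
move=> ha hc; apply/idP/idP => [/eqP h|/andP [/eqP h1 /eqP h2]]; last by rewrite h1 h2.
have e1 : (i = i0 :> nat) by lia.
have e2 : a = c by lia.
by rewrite e2 eqxx andbT; apply/eqP; apply: val_inj.
Qed.

Lemma Phi_ind w mu (i0 : 'I_n) c : (c < 3)%N ->
  Phi w mu (fun k => ((k == 3 * i0 + c)%N)%:R) =
  if c == 0%N then \sum_(j < n | E i0 j) WW w i0 j * (x i0 - x j)
  else if c == 1%N then \sum_(j < n | E i0 j) WW w i0 j * (y i0 - y j)
  else mu i0 - radial_force E r (WW w) i0.
Proof.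
move=> hc; rewrite /Phi EXP -big_split /=.
set G := (X in _ = X).
rewrite (eq_bigr (fun i => (i == i0)%:R * G)); first by rewrite /G sum_ind /=.
move=> i _; rewrite /zx /zy /zr.
have e0 : (3 * i == 3 * i0 + c)%N = (i == i0) && (0 == c)%N.
  by rewrite -eq3 // addn0.
rewrite e0 !eq3 //.
case: (eqVneq i i0) => [->|hne] /=; last by rewrite !mul0r; ring.
move: hc; rewrite /G; clear G e0; case: c => [|[|[|c]]] //= _; ring.
Qed.

Lemma dir1 : extendable E cls x y r x' y' r' ->
  (exists w, blocks E cls x y r x' y' r' w) -> False.
Proof.
move=> [x'' [y'' [r'' [Heq Hs]]]] [w [[wsym Heqw] [Hf Hpos]]].
set Fp := (fun i j => _) in Hpos.
have h1 : SS E (fun i j => w i j * linX x'' y'' r'' i j) = SS E (fun i j => w i j * Bc i j).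
  by apply: SS_ext => i j hij; rewrite /linX /Bc Heq.
have h2 : SS E (fun i j => w i j * Bc i j) = - (esum E Fp + esum E Fp).
  rewrite -(SS_half symE irrE); last by move=> i j; rewrite /Fp (wsym i j); ring.
  rewrite -mulN1r -SSZ; apply: SS_ext => i j _; rewrite /Fp /Bc; ring.
have hx i : \sum_(j < n | E i j) WW w i j * (x i - x j) = 0.
  rewrite (eq_bigr (fun j => 2 * (w i j * (x i - x j)))) => [|j _].
    by rewrite -mulr_sumr (Heqw i).1 mulr0.
  rewrite /WW (wsym j i); ring.
have hy i : \sum_(j < n | E i j) WW w i j * (y i - y j) = 0.
  rewrite (eq_bigr (fun j => 2 * (w i j * (y i - y j)))) => [|j _].
    by rewrite -mulr_sumr (Heqw i).2 mulr0.
  rewrite /WW (wsym j i); ring.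
have hr i : radial_force E r (WW w) i = 2 * radial_force E r w i.
  rewrite /radial_force mulr_sumr; apply: eq_bigr => j _.
  rewrite /WW (wsym j i); ring.
have h3 : 0 <= SS E (fun i j => w i j * linX x'' y'' r'' i j).
  rewrite EXP; apply: sumr_ge0 => i _; rewrite hx hy hr.
  move: (Hs i) (Hf i); case: (mod_class cls r' i) => /= ha hb.
  - nra.
  - nra.
  - rewrite ha; lra.
  - rewrite hb; lra.
lra.
Qed.

Lemma dir2 : ~ (exists w, blocks E cls x y r x' y' r' w) ->
  extendable E cls x y r x' y' r'.
Proof.
move=> Hnb; case: (FM (3 * n) Cp) => [[z Hz]|[a [b [Hd [Ha Hb]]]]].
  exists (zx z), (zy z), (zr z); split.
    move=> i j hij.
    have h1 := Hz (inl (i, j, true)); have h2 := Hz (inl (i, j, false)).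
    rewrite /= hij /= !dotZ dot_ev /sg in h1 h2.
    suff : linX (zx z) (zy z) (zr z) i j = Bc i j by [].
    lra.
  move=> i.
  have h1 := Hz (inr (i, true)); have h2 := Hz (inr (i, false)).
  rewrite /= (dotZ _ _ (fun k => delta k _)) dot_delta ?lt3 // in h1.
  rewrite /= (dotZ _ _ (fun k => delta k _)) dot_delta ?lt3 // in h2.
  move: h1 h2; rewrite /cf /zr; case: (mod_class cls r' i) => /= h1 h2; lra.
exfalso; apply: Hnb.
have [w [mu [Hf [Hdot Hb']]]] : Sset a b.
  elim: Hd => [c|a1 b1 a2 b2 _ h1 _ h2|c a0 b0 hc _ h].
  - exact: S_Cp.
  - exact: S_add.
  - exact: S_scale.
have H0 z : Phi w mu z = 0.
  by rewrite -Hdot /dot big1 // => k _; rewrite Ha ?mul0r.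
exists (WW w); split; [split|split].
- by move=> i j; rewrite /WW addrC.
- move=> i0; split.
  + by have := H0 (fun k => ((k == 3 * i0 + 0)%N)%:R); rewrite Phi_ind.
  + by have := H0 (fun k => ((k == 3 * i0 + 1)%N)%:R); rewrite Phi_ind.
- move=> i0; have := H0 (fun k => ((k == 3 * i0 + 2)%N)%:R); rewrite Phi_ind //=.
  move=> h; have -> : radial_force E r (WW w) i0 = mu i0 by lra.
  exact: Hf.
- set Fp := (fun i j => _).
  have h1 : SS E Fp = esum E Fp + esum E Fp.
    by apply: (SS_half symE irrE) => i j; rewrite /Fp /WW; ring.
  have h2' : SS E (fun i j => WW w i j * Bc i j) = Psi w + Psi w.
    by apply: (SS_split symE) => i j _; rewrite /WW /Bc; ring.
  have h2 : SS E Fp = -1 * SS E (fun i j => WW w i j * Bc i j).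
    by rewrite -SSZ; apply: SS_ext => i j _; rewrite /Fp /Bc; ring.
  rewrite h2' -Hb' in h2; lra.
Qed.

End Prob.

Theorem mainTheorem9 (R : realType) (n : nat) (E : rel 'I_n)
    (rs : 'I_n -> seq 'I_n) (x y r : 'I_n -> R) (cls : 'I_n -> vclass)
    (x' y' r' : 'I_n -> R) :
  planar_embedding E rs ->
  packing E rs x y r ->
  inf_flex E x y r x' y' r' ->
  proper_flex cls r' ->
  ~ trivial_flex x y x' y' r' ->
  (extendable E cls x y r x' y' r' <->
   ~ (exists w : 'I_n -> 'I_n -> R, blocks E cls x y r x' y' r' w)).
Proof.
move=> [[symE irrE] _] _ _ _ _; split.
- by move=> h1 h2; exact: (dir1 symE irrE h1 h2).
- exact: (dir2 symE irrE).
Qed.
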